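(* For any positive integers $k\le n$, $$\frac{n(n+1)(n+2)}{(2,n)}\ \Big|\ (n+k+1)\binom{n+k}{k}\binom{n+1}{k+1}\binom{2k}{k+1},$$ where $(2,n)$ is the greatest common divisor of $2$ and $n$. *)

(* Defs.v *)
From mathcomp Require Import all_boot.

(* Main.v *)
Require Import Defs.
From mathcomp Require Import all_boot all_algebra zify ring.

Lemma canc a b P : 0 < P -> a * P = b * P -> a = b.
Proof. by move=> HP /eqP; rewrite eqn_pmul2r // => /eqP. Qed.

Lemma cat_fact k : ('C(k.*2, k) - 'C(k.*2, k.+1)) * (k`! * k.+1`!) = (k.*2)`!.
Proof.
have h1 := bin_fact (leq_addr k k).
have h2 := mul_bin_left (k.*2) k.
rewrite -addnn addnK in h1 h2. rewrite -addnn.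
have h3 : 'C(k + k, k.+1) <= 'C(k + k, k) by nia.
have h4 : ('C(k + k, k) - 'C(k + k, k.+1)) * k.+1 = 'C(k + k, k) by nia.
set X := (_ - _) in h4 *. rewrite factS -h1 -h4; ring.
Qed.

Section H.
Variables (k n j m : nat) (hk : k = j.+1) (hn : n = k + m).
Let cat := 'C(k.*2, k) - 'C(k.*2, k.+1).
Let e1 : 'C(n + k, k) * (k`! * n`!) = (n + k)`!.
Proof. by have := bin_fact (leq_addl n k); rewrite addnK. Qed.
Let e2 : 'C(n.+1, k.+1) * (k.+1`! * m`!) = n.+1`!.
Proof. have -> : m = n.+1 - k.+1 by lia. apply: bin_fact; lia. Qed.
Let e3 : 'C(k.*2, k.+1) * (k.+1`! * j`!) = (k.*2)`!.
Proof. have -> : j = k.*2 - k.+1 by lia. apply: bin_fact; lia. Qed.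
Let ec1 : 'C((n + k).+1, k.+1) * (k.+1`! * n`!) = (n + k).+1`!.
Proof. have {2}-> : n = (n + k).+1 - k.+1 by lia. apply: bin_fact; lia. Qed.
Let ec2 : 'C(j + m, j) * (j`! * m`!) = (j + m)`!.
Proof. have {2}-> : m = j + m - j by lia. apply: bin_fact; lia. Qed.
Let ed1 : 'C((n + k).+1, j) * (j`! * n.+2`!) = (n + k).+1`!.
Proof. have -> : n.+2 = (n + k).+1 - j by lia. apply: bin_fact; lia. Qed.
Let ecat : cat * (k`! * k.+1`!) = (k.*2)`!.
Proof. exact: cat_fact. Qed.
Let f3 : n`! = n * (j + m)`!.
Proof. by rewrite hn hk addSn factS. Qed.
Let f5 : k`! = k * j`!.
Proof. by rewrite hk factS. Qed.

Lemma id1 : (n + k).+1 * 'C(n + k, k) * 'C(n.+1, k.+1) * 'C(k.*2, k.+1) =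
  n * n.+1 * ('C((n + k).+1, k.+1) * 'C(j + m, j) * cat).
Proof.
apply: (@canc _ _ ((k`! * n`!) * (k.+1`! * m`!) * (k.+1`! * j`!) *
   ((k.+1`! * n`!) * (j`! * m`!) * (k`! * k.+1`!)))).
  by rewrite !muln_gt0 !fact_gt0.
transitivity ((n + k).+1 * ('C(n + k, k) * (k`! * n`!)) * ('C(n.+1, k.+1) * (k.+1`! * m`!))
  * ('C(k.*2, k.+1) * (k.+1`! * j`!)) * ((k.+1`! * n`!) * (j`! * m`!) * (k`! * k.+1`!))).
  ring.
rewrite e1 e2 e3.
transitivity (n * n.+1 * ('C((n + k).+1, k.+1) * (k.+1`! * n`!)) * ('C(j + m, j) * (j`! * m`!))
  * (cat * (k`! * k.+1`!)) * ((k`! * n`!) * (k.+1`! * m`!) * (k.+1`! * j`!))); last by ring.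
rewrite ec1 ec2 ecat !factS f3 f5; ring.
Qed.

Lemma id2 : (n + k).+1 * 'C(n + k, k) * 'C(n.+1, k.+1) * 'C(k.*2, k.+1) =
  n.+1 * n.+2 * ('C((n + k).+1, j) * 'C(n.+1, k.+1) * cat).
Proof.
apply: (@canc _ _ ((k`! * n`!) * (k.+1`! * m`!) * (k.+1`! * j`!) *
   ((j`! * n.+2`!) * (k.+1`! * m`!) * (k`! * k.+1`!)))).
  by rewrite !muln_gt0 !fact_gt0.
transitivity ((n + k).+1 * ('C(n + k, k) * (k`! * n`!)) * ('C(n.+1, k.+1) * (k.+1`! * m`!))
  * ('C(k.*2, k.+1) * (k.+1`! * j`!)) * ((j`! * n.+2`!) * (k.+1`! * m`!) * (k`! * k.+1`!))).
  ring.
rewrite e1 e2 e3.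
transitivity (n.+1 * n.+2 * ('C((n + k).+1, j) * (j`! * n.+2`!)) * ('C(n.+1, k.+1) * (k.+1`! * m`!))
  * (cat * (k`! * k.+1`!)) * ((k`! * n`!) * (k.+1`! * m`!) * (k.+1`! * j`!))); last by ring.
rewrite ed1 e2 ecat !factS f3 f5; ring.
Qed.
End H.

Theorem lemma4p2 (n k : nat) (hk : 0 < k) (hkn : k <= n) :
  (n * n.+1 * n.+2) %/ gcdn 2 n %|
    (n + k).+1 * 'C(n + k, k) * 'C(n.+1, k.+1) * 'C(k.*2, k.+1).
Proof.
case: k hk hkn => [//|j] _ hkn.
have hn : n = j.+1 + (n - j.+1) by lia.
have d1 := @id1 j.+1 n j (n - j.+1) (erefl _) hn.
have d2 := @id2 j.+1 n j (n - j.+1) (erefl _) hn.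
have hl : lcmn (n * n.+1) (n.+1 * n.+2) %| (n + j.+1).+1 * 'C(n + j.+1, j.+1) * 'C(n.+1, j.+2) * 'C(j.+1.*2, j.+2).
  by rewrite dvdn_lcm; apply/andP; split; [rewrite d1|rewrite d2]; apply: dvdn_mulr.
suff -> : n * n.+1 * n.+2 %/ gcdn 2 n = lcmn (n * n.+1) (n.+1 * n.+2) by [].
have g0 : 0 < gcdn 2 n by rewrite gcdn_gt0.
have hg : gcdn (n * n.+1) (n.+1 * n.+2) = n.+1 * gcdn 2 n.
  by rewrite (mulnC n) -muln_gcdr (_ : n.+2 = 2 + n) // gcdnDr gcdnC.
have := muln_lcm_gcd (n * n.+1) (n.+1 * n.+2).
rewrite hg => h.
have h' : lcmn (n * n.+1) (n.+1 * n.+2) * gcdn 2 n = n * n.+1 * n.+2.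
  apply/eqP; rewrite -(eqn_pmul2r (ltn0Sn n)); apply/eqP.
  rewrite -mulnA (mulnC (gcdn 2 n)) h; ring.
by rewrite -h' mulnK.
Qed.
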